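(* Fix an integer $\Delta\geq 3$. There is a function $\varepsilon:\mathbb{N}\to\mathbb{R}$, depending only on $n$ (for the fixed $\Delta$), with $\varepsilon(n)\to 0$ as $n\to\infty$, such that for every integer $n\geq 3$, every graph $G$ of order $n$ and maximum degree at most $\Delta$ satisfies $$Mo(G)\leq \frac{\Delta}{2}n^2-(2-\varepsilon(n))\frac{\Delta-2}{(\Delta-1)^2}\,n\log_{(\Delta-1)}\left(\log_{(\Delta-1)}(n)\right).$$
   Context: All graphs are finite and simple. For a graph $G$ and an edge $uv$ of $G$, $n_G(u,v)$ denotes the number of vertices of $G$ whose distance in $G$ to $u$ is smaller than their distance to $v$ (vertices in other components have infinite distance to both and are not counted). The Mostar index of $G$ is $Mo(G)=\sum_{uv\in E(G)}|n_G(u,v)-n_G(v,u)|$. The $o(1)$ term of the paper is written here as $\varepsilon(n)$. *)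

(* Defs.v *)
From mathcomp Require Import all_boot.
From Stdlib Require Import Reals.
Set Implicit Arguments. Unset Strict Implicit. Unset Printing Implicit Defensive.

Section Graphs.
Variable T : finType.
Variable e : rel T.

Definition simple_graph : Prop := symmetric e /\ irreflexive e.

Definition deg (v : T) : nat := #|[set w | e v w]|.

Definition maxdeg_le (D : nat) : Prop := forall v, deg v <= D.

Fixpoint walkn (k : nat) (x y : T) : bool :=
  match k with
  | 0 => x == y
  | k'.+1 => [exists z, e x z && walkn k' z y]
  end.

(* Graph distance; None = infinite (different components).  A shortest walk
   is a path, so it has length < #|T|. *)
Definition dist (x y : T) : option nat :=
  let s := iota 0 #|T| in
  if has (fun k => walkn k x y) s then Some (find (fun k => walkn k x y) s)
  else None.

Definition closer (w u v : T) : bool :=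
  match dist w u, dist w v with
  | Some a, Some b => a < b
  | Some _, None => true
  | None, _ => false
  end.

Definition nG (u v : T) : nat := #|[set w | closer w u v]|.

(* absolute difference in nat written as (a - b) + (b - a) (truncated subtraction). *)
(* Mostar index: sum over (unordered) edges of |n(u,v) - n(v,u)|.
   The sum over ordered adjacent pairs counts each edge exactly twice. *)
Definition mostar : nat :=
  (\sum_(u : T) \sum_(v : T | e u v) ((nG u v - nG v u) + (nG v u - nG u v))) %/ 2.

End Graphs.

Definition logb (b x : R) : R := (ln x / ln b)%R.

(* Main.v *)
Require Import Defs.
From mathcomp Require Import all_boot zify.
Set Implicit Arguments. Unset Strict Implicit. Unset Printing Implicit Defensive.

Section G.
Variable T : finType.
Variable e : rel T.
Hypothesis esym : symmetric e.

Lemma walkn1 x y : walkn e 1 x y = e x y.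
Proof.
apply/existsP/idP => [[z /andP[exz /eqP <-]] //|exy]; by exists y; rewrite exy eqxx.
Qed.

Lemma walknS_r k x y : walkn e k.+1 x y = [exists z, walkn e k x z && e z y].
Proof.
elim: k x => [|k IH] x.
  rewrite walkn1; apply/idP/existsP => [exy|[z /andP[/eqP <- //]]].
  by exists x; rewrite /= eqxx.
have E : walkn e k.+2 x y = [exists z, e x z && walkn e k.+1 z y] by [].
rewrite E; apply/existsP/existsP => [[z /andP[exz]]|[w /andP[]]].
  rewrite IH => /existsP[w /andP[hzw ewy]]; exists w; rewrite ewy andbT.
  have E2 : walkn e k.+1 x w = [exists z, e x z && walkn e k z w] by [].
  by rewrite E2; apply/existsP; exists z; apply/andP; split.
have E2 : walkn e k.+1 x w = [exists z, e x z && walkn e k z w] by [].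
rewrite E2 => /existsP[z /andP[exz hzw]] ewy; exists z; apply/andP; split => //.
by rewrite IH; apply/existsP; exists w; apply/andP; split.
Qed.

Lemma walkn_sym k x y : walkn e k x y = walkn e k y x.
Proof.
elim: k x y => [|k IH] x y; first by rewrite /= eq_sym.
rewrite walknS_r /=; apply/existsP/existsP => [[z /andP[h1 h2]]|[z /andP[h1 h2]]];
  exists z; by rewrite esym IH ?h1 ?h2 // -IH.
Qed.

Lemma walkn_cat a b x y z : walkn e a x y -> walkn e b y z -> walkn e (a + b) x z.
Proof.
elim: a x => [|a IH] x /=; first by move=> /eqP ->.
move=> /existsP[w /andP[exw hw]] hb; apply/existsP; exists w; rewrite exw /=.
exact: IH hw hb.
Qed.

Lemma walkn_split a b x z : walkn e (a + b) x z -> exists2 y, walkn e a x y & walkn e b y z.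
Proof.
elim: a x => [|a IH] x /=; first by move=> h; exists x.
move=> /existsP[w /andP[exw hw]]; have [y h1 h2] := IH _ hw.
by exists y => //; apply/existsP; exists w; rewrite exw.
Qed.

Definition Bset i x := [set z | [exists j : 'I_i.+1, walkn e j x z]].

Lemma Bset_mono i m x : Bset i x \subset Bset (i + m) x.
Proof.
apply/subsetP => z; rewrite !inE => /existsP[j hj].
apply/existsP; have lt : j < (i + m).+1 by rewrite ltnS (leq_trans (ltnSE (ltn_ord j))) ?leq_addr.
by exists (Ordinal lt).
Qed.

Lemma BsetS i x z : (z \in Bset i.+1 x) = (z \in Bset i x) || [exists w, (w \in Bset i x) && e w z].
Proof.
rewrite !inE; apply/existsP/idP.
  move=> [j hj]; case: (ltnP j i.+1) => hji.
    by apply/orP; left; apply/existsP; exists (Ordinal hji).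
  have ej : nat_of_ord j = i.+1 by apply/eqP; rewrite eqn_leq hji -ltnS ltn_ord.
  move: hj; rewrite ej walknS_r => /existsP[w /andP[h1 h2]].
  apply/orP; right; apply/existsP; exists w; rewrite h2 andbT inE.
  by apply/existsP; exists ord_max.
move=> /orP[/existsP[j hj]|/existsP[w /andP[]]].
  have lt : j < i.+2 by apply: ltnW; rewrite ltnS ltn_ord.
  by exists (Ordinal lt).
rewrite inE => /existsP[j hj] ewz.
have lt : j.+1 < i.+2 by rewrite ltnS ltn_ord.
by exists (Ordinal lt); rewrite [walkn e _ x z]/= -/(walkn e j.+1 x z) walknS_r; apply/existsP; exists w; rewrite hj.
Qed.

Lemma Bset_stab i x : Bset i x = Bset i.+1 x -> forall m, Bset (i + m) x = Bset i x.
Proof.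
move=> h; elim=> [|m IH]; first by rewrite addn0.
by apply/setP => z; rewrite addnS BsetS IH -BsetS -h.
Qed.

Lemma Bset_grow m x : (forall i, i < m -> Bset i x != Bset i.+1 x) -> m < #|Bset m x|.
Proof.
elim: m => [|m IH] h.
  apply/card_gt0P; exists x; rewrite inE; apply/existsP; exists ord0; by rewrite /= eqxx.
have := IH (fun i lt => h i (ltnW lt)) => lt1.
have hp : Bset m x \proper Bset m.+1 x.
  by rewrite properEneq h // -addn1 Bset_mono.
exact: leq_ltn_trans lt1 (proper_card hp).
Qed.

Lemma walkn_short j x y : walkn e j x y -> exists2 k, k < #|T| & walkn e k x y.
Proof.
move=> hj.
have T0 : 0 < #|T| by apply/card_gt0P; exists x.
set N := #|T|.-1.
have yB : y \in Bset N x.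
  case: (boolP [exists i : 'I_N, Bset i x == Bset i.+1 x]).
    move=> /existsP[i /eqP hi].
    have yj : y \in Bset (i + j) x.
      rewrite inE; apply/existsP; have lt : j < (i+j).+1 by rewrite ltnS leq_addl.
      by exists (Ordinal lt).
    rewrite (Bset_stab hi) in yj.
    have := Bset_mono i (N - i) x; rewrite subnKC ?(ltnW (ltn_ord i)) //.
    by move=> /subsetP; apply.
  rewrite negb_exists => /forallP hall.
  have := @Bset_grow N x (fun i lt => hall (Ordinal lt)).
  apply: contraTT => yN.
  rewrite -leqNgt.
  have sub : Bset N x \subset ~: [set y].
    by apply/subsetP => z hz; rewrite !inE; apply: contraNneq yN => <-.
  by rewrite (leq_trans (subset_leq_card sub)) // cardsC1.
move: yB; rewrite inE => /existsP[k hk]; exists k => //.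
have hk2 := ltn_ord k; have eN : N.+1 = #|T| by rewrite /N prednK. by rewrite -eN.
Qed.

Lemma dist_someP x y k : dist e x y = Some k ->
  walkn e k x y /\ forall j, walkn e j x y -> k <= j.
Proof.
rewrite /dist; case: ifP => // hhas [<-].
have hs : find (fun k => walkn e k x y) (iota 0 #|T|) < #|T|.
  by rewrite -[X in _ < X](size_iota 0) -has_find.
split.
  by have := nth_find 0 hhas; rewrite nth_iota // add0n.
move=> j hj; rewrite leqNgt; apply/negP => lt.
have := before_find 0 lt; rewrite nth_iota ?add0n ?hj //.
exact: ltn_trans lt hs.
Qed.

Lemma dist_walk x y j : walkn e j x y -> exists2 k, dist e x y = Some k & k <= j.
Proof.
move=> hj; have [k0 hk0 wk0] := walkn_short hj.
have hhas : has (fun k => walkn e k x y) (iota 0 #|T|).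
  by apply/hasP; exists k0; rewrite ?mem_iota ?add0n.
have hd : dist e x y = Some (find (fun k => walkn e k x y) (iota 0 #|T|)).
  by rewrite /dist hhas.
exists (find (fun k => walkn e k x y) (iota 0 #|T|)) => //.
by have [_ ] := dist_someP hd; apply.
Qed.

Lemma dist_sym x y : dist e x y = dist e y x.
Proof.
have E : (fun k => walkn e k x y) =1 (fun k => walkn e k y x) by move=> k; apply: walkn_sym.
by rewrite /dist (eq_has E) (eq_find E).
Qed.

Lemma dist_none x y j : dist e x y = None -> walkn e j x y = false.
Proof.
move=> h; apply/negP => hj; have [k] := dist_walk hj; by rewrite h.
Qed.

Lemma dist_eqP x y k : dist e x y = Some k <-> walkn e k x y /\ forall j, walkn e j x y -> k <= j.
Proof.
split; first exact: dist_someP.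
move=> [wk hmin]; have [k' hk' le'] := dist_walk wk.
have [wk' _] := dist_someP hk'.
by rewrite hk'; congr Some; apply/eqP; rewrite eqn_leq le' hmin.
Qed.

Lemma dist_tri x y z a b : dist e x y = Some a -> dist e y z = Some b ->
  exists2 c, dist e x z = Some c & c <= a + b.
Proof.
move=> /dist_someP[wa _] /dist_someP[wb _]; exact: dist_walk (walkn_cat wa wb).
Qed.

Lemma geodesic y z k i : dist e y z = Some k -> i < k ->
  exists u, exists v, [/\ e u v, dist e y u = Some i, dist e y v = Some i.+1,
     dist e z v = Some (k - i.+1) & dist e z u = Some (k - i)].
Proof.
move=> hk lt; have [wk kmin] := dist_someP hk.
have ek : k = i + (1 + (k - i.+1)) by lia.
move: wk; rewrite ek => /walkn_split[u wu /walkn_split[v wuv wv]].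
rewrite walkn1 in wuv.
exists u, v.
have [du hdu ledu] := dist_walk wu.
have wuz : walkn e (1 + (k - i.+1)) u z by rewrite -[1 + _]/((0 + 1) + _) (walkn_cat _ wv) // walkn1.
have [d1 hd1 led1] := dist_walk wuz.
have [d2 hd2 led2] := dist_walk wv.
have wyv : walkn e (i + 1) y v by apply: walkn_cat wu _; rewrite walkn1.
have [dv hdv ledv] := dist_walk wyv.
have [c1 hc1 lec1] := dist_tri hdu hd1.
have [c2 hc2 lec2] := dist_tri hdv hd2.
rewrite hk in hc1 hc2; case: hc1 => hc1; case: hc2 => hc2; subst c1 c2.
have eu : du = i by lia.
have e1 : d1 = k - i by lia.
have ev : dv = i.+1 by lia.
have e2 : d2 = k - i.+1 by lia.
subst.
by split => //; rewrite -ek dist_sym.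
Qed.

Definition tt y z := #|[set p : T * T | e p.1 p.2 && closer e y p.1 p.2 && closer e z p.2 p.1]|.

Lemma t_ge y z k : dist e y z = Some k -> k <= tt y z.
Proof.
move=> hk.
pose P (i : 'I_k) (p : T * T) := [&& e p.1 p.2, dist e y p.1 == Some (nat_of_ord i),
   dist e y p.2 == Some i.+1, dist e z p.2 == Some (k - i.+1) & dist e z p.1 == Some (k - i)].
have exP i : exists p, P i p.
  have [u [v [h1 h2 h3 h4 h5]]] := geodesic hk (ltn_ord i).
  by exists (u, v); rewrite /P /= h1 h2 h3 h4 h5 !eqxx.
pose f i := odflt (y, y) [pick p | P i p].
have fP i : P i (f i).
  rewrite /f; case: pickP => [p //|h]; exfalso; have [p hp] := exP i; by rewrite h in hp.
have finj : injective f.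
  move=> i j hij; have := fP i; have := fP j; rewrite /P hij => /and5P[_ /eqP -> _ _ _].
  by move=> /and5P[_ /eqP [] h _ _ _]; apply/val_inj.
rewrite -[X in X <= _]card_ord -cardsT -(card_imset _ finj).
apply: subset_leq_card; apply/subsetP => p /imsetP[i _ ->].
have := fP i; move=> /and5P[h1 /eqP h2 /eqP h3 /eqP h4 /eqP h5].
rewrite inE h1 /closer h2 h3 h4 h5 /=.
have := ltn_ord i; lia.
Qed.

Lemma card_sum (I : finType) (P : pred I) : #|[set w | P w]| = \sum_w (P w : nat).
Proof.
rewrite cardsE -sum1_card big_mkcond /=; apply: eq_bigr => w _; rewrite unfold_in; by case: (P w).
Qed.

Lemma card_sum2 (P : pred (T * T)) : #|[set p | P p]| = \sum_u \sum_v (P (u, v) : nat).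
Proof.
rewrite (card_sum P) pair_bigA /=; apply: eq_bigr => [[u v]] _ //.
Qed.

Lemma sum_ab : \sum_u \sum_(v | e u v) nG e u v * nG e v u = \sum_y \sum_z tt y z.
Proof.
have E1 : forall u v, nG e u v * nG e v u =
    \sum_y \sum_z ((closer e y u v : nat) * (closer e z v u : nat)).
  move=> u v; rewrite /nG !card_sum big_distrlr /=; done.
under eq_bigr => u _ do under eq_bigr => v _ do rewrite E1.
under eq_bigr => u _ do rewrite exchange_big /=.
rewrite exchange_big /=; apply: eq_bigr => y _.
under eq_bigr => u _ do under eq_bigr => v _ do idtac.
under eq_bigr => u _ do rewrite exchange_big /=.
rewrite exchange_big /=; apply: eq_bigr => z _.
rewrite /tt card_sum2 /=; apply: eq_bigr => u _.
rewrite big_mkcond /=; apply: eq_bigr => v _.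
by case: (e u v); case: (closer e y u v); case: (closer e z v u).
Qed.

Definition diff u v := (nG e u v - nG e v u) + (nG e v u - nG e u v).
Definition cc u v := #|[set w | ~~ closer e w u v && ~~ closer e w v u]|.
Definition dd y z := if dist e y z is Some k then k else 0.

Lemma closer_asym w u v : closer e w u v -> closer e w v u = false.
Proof.
rewrite /closer; case: (dist e w u) => [a|]; case: (dist e w v) => [b|] //.
by move=> h; rewrite ltnNge ltnW.
Qed.

Lemma partition u v : nG e u v + nG e v u + cc u v = #|T|.
Proof.
rewrite /nG /cc !card_sum -!big_split /=.
rewrite -sum1_card; apply: eq_bigr => w _.
case h1: (closer e w u v); first by rewrite (closer_asym h1).
by case: (closer e w v u).
Qed.

Lemma edge_ineq u v : #|T| * diff u v + #|T| * cc u v + 2 * (nG e u v * nG e v u) <= #|T| * #|T|.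
Proof.
have := partition u v; rewrite /diff.
move: (nG e u v) (nG e v u) (cc u v) #|T| => a b c N h.
wlog hab : a b h / a <= b.
  move=> W; case: (leqP a b) => hab; first exact: W.
  have h' : b + a + c = N by rewrite -h (addnC a).
  have := W b a h' (ltnW hab); rewrite (addnC (b - a)) (mulnC b) //.
have [d hd] : exists d, b = a + d by exists (b - a); lia.
subst b.
have -> : a - (a + d) = 0 by lia.
have -> : a + d - a = d by lia.
have hN : a * (a + d) <= a * N by rewrite leq_mul2l; apply/orP; right; lia.
rewrite -h; nia.
Qed.

Lemma unreach y u v : dist e y u = None -> e u v -> dist e y v = None.
Proof.
move=> hu euv; case hv: (dist e y v) => [k|] //.
have [wk _] := dist_someP hv.
have w : walkn e (k + 1) y u by apply: walkn_cat wk _; rewrite walkn1 esym.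
by have [k' ] := dist_walk w; rewrite hu.
Qed.

Lemma deg_sum u : deg e u = \sum_(v | e u v) 1.
Proof. by rewrite /deg card_sum [RHS]big_mkcond /=; apply: eq_bigr => v _; case: (e u v). Qed.

Lemma cc_sum : \sum_y \sum_(u | dist e y u == None) deg e u <= \sum_u \sum_(v | e u v) cc u v.
Proof.
have -> : \sum_u \sum_(v | e u v) cc u v =
   \sum_y \sum_u \sum_(v | e u v) ((~~ closer e y u v && ~~ closer e y v u) : nat).
  under eq_bigr => u _ do under eq_bigr => v _ do rewrite /cc card_sum.
  under eq_bigr => u _ do rewrite exchange_big /=.
  by rewrite exchange_big.
apply: leq_sum => y _.
rewrite big_mkcond [X in _ <= X]big_mkcond /=; apply: leq_sum => u _.
case: eqP => // hu; rewrite deg_sum [X in _ <= X]big_mkcond /=.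
rewrite big_mkcond /=; apply: leq_sum => v _.
case ev: (e u v) => //.
by rewrite /closer hu (unreach hu ev).
Qed.

Lemma dd_sum : \sum_y \sum_z dd y z <= \sum_u \sum_(v | e u v) nG e u v * nG e v u.
Proof.
rewrite sum_ab; apply: leq_sum => y _; apply: leq_sum => z _.
rewrite /dd; case h: (dist e y z) => [k|] //; exact: t_ge h.
Qed.

Lemma card_exists (I : finType) (P : pred I) (Q : I -> pred T) :
  #|[set z | [exists w, P w && Q w z]]| <= \sum_(w | P w) #|[set z | Q w z]|.
Proof.
rewrite card_sum.
under [X in _ <= X]eq_bigr => w _ do rewrite card_sum.
rewrite [X in _ <= X]exchange_big /=; apply: leq_sum => z _.
case: existsP => [[w /andP[pw qw]]|] //.
by rewrite (bigD1 w) //= qw.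
Qed.

Variable D : nat.
Hypothesis hdeg : forall v, deg e v <= D.
Hypothesis D0 : 0 < D.

Lemma ball j y : #|[set z | walkn e j y z]| <= D ^ j.
Proof.
elim: j y => [|j IH] y.
  rewrite expn0 -(cards1 y); apply: subset_leq_card.
  by apply/subsetP => z; rewrite !inE /= eq_sym.
have -> : [set z | walkn e j.+1 y z] = [set z | [exists w, e y w && walkn e j w z]] by [].
apply: leq_trans (card_exists _ _) _.
apply: (@leq_trans (\sum_(w | e y w) D ^ j)); first by apply: leq_sum => w _; apply: IH.
have -> : \sum_(w | e y w) D ^ j = deg e y * D ^ j.
  by rewrite deg_sum big_distrl /=; apply: eq_bigr => w _; rewrite mul1n.
rewrite expnS; exact: leq_mul.
Qed.

Lemma near y R : #|[set z | [exists j : 'I_R, true && walkn e j y z]]| <= R * D ^ R.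
Proof.
apply: leq_trans (card_exists _ _) _.
apply: (@leq_trans (\sum_(j : 'I_R) D ^ R)).
  apply: leq_sum => j _; apply: leq_trans (ball _ _) _; rewrite leq_pexp2l //; exact: ltnW.
by rewrite sum_nat_const card_ord.
Qed.

Lemma A_bound y R : 2 * R * (1 + D ^ R) <= #|T| ->
  #|T| * R <= #|T| * D * #|[set u | dist e y u == None]| + 2 * \sum_z dd y z.
Proof.
move=> hn.
set s0 := #|[set u | dist e y u == None]|.
set far := #|[set z | if dist e y z is Some k then R <= k else false]|.
have hpart : #|T| <= s0 + far + R * D ^ R.
  apply: leq_trans (leq_add (leqnn _) (near y R)).
  rewrite /s0 /far !card_sum -!big_split /= -sum1_card; apply: leq_sum => z _.
  case h: (dist e y z) => [k|] //=.
  case: (leqP R k) => //= hk.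
  have [wk _] := dist_someP h.
  have -> : [exists j : 'I_R, walkn e j y z] by apply/existsP; exists (Ordinal hk).
  by [].
have hfar : R * far <= \sum_z dd y z.
  rewrite /far card_sum big_distrr /=; apply: leq_sum => z _.
  rewrite /dd; case: (dist e y z) => [k|]; last by rewrite muln0.
  by case: (leqP R k); rewrite ?muln1 ?muln0.
set P := D ^ R in hn hpart *.
set Sd := \sum_z dd y z in hfar *.
case: (leqP R s0) => hs.
  apply: leq_trans (leq_addr _ _).
  rewrite -mulnA leq_mul2l; apply/orP; right.
  apply: leq_trans hs _; rewrite -{1}[s0]mul1n leq_mul2r; lia.
have h2 : #|T| <= 2 * far by nia.
apply: leq_trans (leq_addl _ _).
apply: (@leq_trans (R * (2 * far))); last by lia.
rewrite mulnC leq_mul2l h2 orbT //.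
Qed.

End G.

Section Main.
Variable T : finType.
Variable e : rel T.
Hypothesis esym : symmetric e.
Variable D : nat.
Hypothesis hdeg : forall v, deg e v <= D.

Lemma sum_const_set (P : pred T) c : \sum_(u | P u) c = #|[set u | P u]| * c.
Proof.
by rewrite card_sum big_distrl big_mkcond /=; apply: eq_bigr => u _; case: (P u); rewrite ?mul1n.
Qed.

Lemma main_ineq R :
  (forall y, #|T| * R <= #|T| * D * #|[set u | dist e y u == None]| + 2 * \sum_z dd e y z) ->
  0 < #|T| -> 2 * mostar e + #|T| * R <= D * #|T| * #|T|.
Proof.
move=> hA n0.
set n := #|T| in hA n0 *.
set S := \sum_u \sum_(v | e u v) diff e u v.
set C := \sum_u \sum_(v | e u v) cc e u v.
set AB := \sum_u \sum_(v | e u v) nG e u v * nG e v u.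
set X := \sum_u deg e u.
set W := \sum_u (D - deg e u).
set SY := \sum_y \sum_(u | dist e y u == None) deg e u.
set SZ := \sum_y \sum_(u | dist e y u == None) (D - deg e u).
set SD := \sum_y \sum_z dd e y z.
set Ss0 := \sum_y #|[set u | dist e y u == None]|.
have F1 : n * S + n * C + 2 * AB <= X * (n * n).
  have : \sum_u \sum_(v | e u v) (n * diff e u v + n * cc e u v + 2 * (nG e u v * nG e v u))
      <= \sum_u \sum_(v | e u v) (n * n).
    by apply: leq_sum => u _; apply: leq_sum => v _; apply: edge_ineq.
  have -> : \sum_u \sum_(v | e u v) (n * n) = X * (n * n).
    rewrite /X big_distrl /=; apply: eq_bigr => u _; by rewrite deg_sum big_distrl /=;
      apply: eq_bigr => v _; rewrite mul1n.
  congr (_ <= _).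
  rewrite /S /C /AB !big_distrr -!big_split /=; apply: eq_bigr => u _.
  by rewrite !big_distrr -!big_split.
have F2 : SY <= C by apply: cc_sum.
have F3 : SD <= AB by apply: dd_sum.
have F4 : SZ <= n * W.
  rewrite /SZ /W /n -sum1_card big_distrl /=; apply: leq_sum => y _.
  rewrite mul1n [X in _ <= X](bigID (fun u => dist e y u == None)) /=; exact: leq_addr.
have F5 : W + X = n * D.
  rewrite /W /X -big_split /= /n -sum1_card big_distrl /=; apply: eq_bigr => u _.
  by rewrite mul1n subnK.
have F6 : n * (n * R) <= n * D * Ss0 + 2 * SD.
  rewrite /Ss0 /SD !big_distrr -big_split /=.
  have -> : n * (n * R) = \sum_(y : T) (n * R) by rewrite sum_nat_const.
  apply: leq_sum => y _.
  by apply: hA.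
have F7 : SY + SZ = D * Ss0.
  rewrite /SY /SZ /Ss0 -big_split big_distrr /=; apply: eq_bigr => y _.
  rewrite -big_split /= mulnC -sum_const_set; apply: eq_bigr => u _.
  by rewrite subnKC.
have F8 : 2 * mostar e <= S.
  rewrite /mostar -/S mulnC; exact: leq_trunc_div.
have G1 : n * (n * R) <= n * SY + n * SZ + 2 * SD by rewrite -mulnDr F7; nia.
have G2 : n * SZ <= n * (n * W) by rewrite leq_mul2l F4 orbT.
have G3 : X * (n * n) + n * (n * W) = n * (n * (n * D)) by rewrite -F5; nia.
have G4 : n * SY <= n * C by rewrite leq_mul2l F2 orbT.
have G5 : n * S + n * (n * R) <= n * (n * (n * D)) by lia.
have G6 : S + n * R <= n * (n * D).
  by rewrite -(leq_pmul2l n0) mulnDr.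
have -> : D * n * n = n * (n * D) by nia.
lia.
Qed.
End Main.

Lemma pow2_ge R : 5 <= R -> 3 * R + 4 <= 2 ^ R.
Proof.
elim: R => [|R IH] //; rewrite leq_eqVlt => /orP[/eqP <- //|h].
have := IH h; rewrite expnS; lia.
Qed.

Lemma tower b R : 2 <= b -> 5 <= R -> 2 * (R + 1) * (1 + (b + 1) ^ (R + 1)) <= b ^ (b ^ R).
Proof.
move=> hb hR.
have h2 := pow2_ge hR.
have h2b : 2 ^ R <= b ^ R by rewrite leq_exp2r //; lia.
have e1 : (b + 1) ^ (R + 1) <= b ^ (2 * R + 2).
  have -> : 2 * R + 2 = 2 * (R + 1) by lia.
  rewrite expnM leq_exp2r ?addn1 //; rewrite expnS expn1; nia.
have e2 : 1 + (b + 1) ^ (R + 1) <= b ^ (2 * R + 3).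
  have : 1 <= b ^ (2 * R + 2) by rewrite expn_gt0; lia.
  rewrite (addnS _ 2) expnS; nia.
have e3 : 2 * (R + 1) <= b ^ (R + 1).
  rewrite addn1 expnS; nia.
apply: (@leq_trans (b ^ (R + 1) * b ^ (2 * R + 3))); first exact: leq_mul.
rewrite -expnD leq_exp2l; lia.
Qed.

Unset Implicit Arguments.
From Stdlib Require Import Reals Lra Lia.

Lemma ln_gt_0' x : (1 < x)%R -> (0 < ln x)%R.
Proof. move=> h; rewrite -ln_1; apply: ln_increasing => //; lra. Qed.

Lemma ln_le' x y : (0 < x)%R -> (x <= y)%R -> (ln x <= ln y)%R.
Proof.
move=> h0 h; case: (Rle_lt_or_eq_dec _ _ h) => [lt|->]; last lra.
by apply: Rlt_le; apply: ln_increasing.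
Qed.

Lemma expn_pow m k : expn m k = Nat.pow m k.
Proof. elim: k => [|k IH] //; by rewrite expnS IH. Qed.

Lemma L_le (D n R : nat) : 3 <= D -> 3 <= n -> n <= expn (D - 1) (expn (D - 1) R) ->
  (logb (INR D - 1) (logb (INR D - 1) (INR n)) <= INR R)%R.
Proof.
move=> hD hn hle.
have b1 : (1 < INR D - 1)%R.
  have : (INR 3 <= INR D)%R by apply: le_INR; apply/leP.
  rewrite /INR; lra.
have eb : INR (D - 1) = (INR D - 1)%R by rewrite minus_INR ?INR_1 //; apply/leP; lia.
have lb : (0 < ln (INR D - 1))%R by apply: ln_gt_0'.
have n0 : (1 < INR n)%R.
  have : (INR 3 <= INR n)%R by apply: le_INR; apply/leP.
  rewrite {1}/INR; lra.
have lnn : (0 < ln (INR n))%R by apply: ln_gt_0'.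
rewrite /logb.
have h1 : (ln (INR n) / ln (INR D - 1) <= (INR D - 1) ^ R)%R.
  apply: (Rmult_le_reg_r (ln (INR D - 1))) => //.
  rewrite /Rdiv Rmult_assoc Rinv_l ?Rmult_1_r; last lra.
  have : (INR n <= (INR D - 1) ^ ((D - 1) ^ R))%R.
    by rewrite -eb -pow_INR; apply: le_INR; apply/leP; rewrite -!expn_pow.
  move=> h; have := ln_le' _ _ (Rlt_trans _ _ _ Rlt_0_1 n0) h.
  rewrite ln_pow; last lra.
  by rewrite pow_INR eb.
have pos : (0 < ln (INR n) / ln (INR D - 1))%R by apply: Rdiv_lt_0_compat.
have h2 := ln_le' _ _ pos h1.
rewrite ln_pow in h2; last lra.
apply: (Rmult_le_reg_r (ln (INR D - 1))) => //.
rewrite /Rdiv Rmult_assoc Rinv_l ?Rmult_1_r; last lra.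
exact: h2.
Qed.

Lemma c_bounds (D : nat) : 3 <= D ->
  (0 <= (INR D - 2) / (INR D - 1) ^ 2)%R /\ (4 * ((INR D - 2) / (INR D - 1) ^ 2) <= 1)%R.
Proof.
move=> hD.
have d3 : (3 <= INR D)%R.
  have : (INR 3 <= INR D)%R by apply: le_INR; apply/leP.
  rewrite {1}/INR; lra.
have p : (0 < (INR D - 1) ^ 2)%R by apply: pow_lt; lra.
split.
  apply: Rmult_le_pos; first lra.
  by apply: Rlt_le; apply: Rinv_0_lt_compat.
apply: (Rmult_le_reg_r ((INR D - 1) ^ 2)) => //.
rewrite Rmult_1_l /Rdiv Rmult_assoc Rmult_assoc Rinv_l; last lra.
rewrite Rmult_1_r; nra.
Qed.

Theorem theorem2 (D : nat) (hD : 3 <= D) :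
  exists eps : nat -> R,
    Un_cv (fun n => eps n) 0%R /\
    forall (n : nat), 3 <= n ->
    forall (T : finType) (e : rel T),
      #|T| = n -> simple_graph e -> maxdeg_le e D ->
      (INR (mostar e) <=
         INR D / 2 * INR n ^ 2
         - (2 - eps n) * (INR D - 2) / (INR D - 1) ^ 2 * INR n
           * logb (INR D - 1) (logb (INR D - 1) (INR n)))%R.
Proof.
set N0 := muln (muln 2 5) (addn 1 (expn D 5)).
exists (fun n => if leq N0 n then 0%R else 2%R); split.
  move=> eps heps; exists N0 => n hn.
  have -> : leq N0 n by apply/leP.
  rewrite /R_dist Rminus_0_r Rabs_R0; exact: heps.
move=> n hn T e hT [esym _] hdeg.
have D0 : 0 < D by lia.
have n0 : 0 < #|T| by rewrite hT; lia.
have [c0 c4] := c_bounds D hD.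
set c := ((INR D - 2) / (INR D - 1) ^ 2)%R in c0 c4 *.
set L := logb (INR D - 1) (logb (INR D - 1) (INR n)).
have nR0 : (0 <= INR n)%R by apply: pos_INR.
have toR : forall R, 2 * mostar e + #|T| * R <= D * #|T| * #|T| ->
    (2 * INR (mostar e) + INR n * INR R <= INR D * (INR n * INR n))%R.
  move=> R h; rewrite hT in h.
  have := le_INR _ _ (elimT leP h).
  rewrite -!multE -!plusE !plus_INR !mult_INR /=; lra.
case: (leqP N0 n) => hN.
  pose P k := leq (muln (muln 2 k) (addn 1 (expn D k))) n.
  have exP : exists k, P k by exists 5.
  have ubP : forall k, P k -> k <= n.
    move=> k; rewrite /P => h; apply: leq_trans h; rewrite -mulnA.
    have : 1 <= 1 + expn D k by lia.
    nia.
  case: (ex_maxnP exP ubP) => R PR maxR.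
  have R5 : 5 <= R by apply: maxR.
  have notP : n < muln (muln 2 (R + 1)) (addn 1 (expn D (R + 1))).
    rewrite ltnNge; apply/negP => h; have := maxR (R + 1) h; lia.
  have hle : n <= expn (D - 1) (expn (D - 1) R).
    apply: ltnW; apply: leq_trans notP _.
    have := @tower (D - 1) R ltac:(lia) R5.
    by have -> : D - 1 + 1 = D by lia.
  have hL := @L_le D n R hD hn hle.
  have PR' : muln (muln 2 R) (addn 1 (expn D R)) <= #|T| by rewrite hT.
  have hmain := main_ineq esym hdeg (fun y => A_bound hdeg D0 y PR') n0.
  have hr := toR _ hmain.
  have -> : (2 - 0 = 2)%R by lra.
  rewrite -/L in hL.
  have key : (2 * c * INR n * L <= INR n * INR R / 2)%R.
    have hR0 : (0 <= INR R)%R by apply: pos_INR.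
    have h2 : (0 <= INR n * (INR R - L))%R by apply: Rmult_le_pos; lra.
    case: (Rle_lt_dec L 0) => hL0.
      have h1 : (0 <= c * INR n)%R by apply: Rmult_le_pos.
      have h3 : (c * INR n * L <= 0)%R.
        rewrite -(Rmult_0_r (c * INR n)); apply: Rmult_le_compat_l => //.
      have h4 : (0 <= INR n * INR R)%R by apply: Rmult_le_pos.
      lra.
    have h1 : (0 <= (1 - 4 * c) * (INR n * L))%R.
      apply: Rmult_le_pos; first lra.
      apply: Rmult_le_pos; lra.
    lra.
  have e2 : (INR n ^ 2 = INR n * INR n)%R by ring.
  have ec : (2 * (INR D - 2) / (INR D - 1) ^ 2 * INR n * L = 2 * c * INR n * L)%R.
    by rewrite /c /Rdiv; ring.
  rewrite e2 ec; lra.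
have hmain := main_ineq esym hdeg (R := 0) (fun y => ltac:(rewrite muln0; exact: leq0n)) n0.
have hr := toR _ hmain.
have ez : ((2 - 2) * (INR D - 2) / (INR D - 1) ^ 2 * INR n * L = 0)%R by rewrite /Rdiv; ring.
have e2 : (INR n ^ 2 = INR n * INR n)%R by ring.
rewrite e2 ez; rewrite /= Rmult_0_r Rplus_0_r in hr.
lra.
Qed.
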